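(* (Flow extension lemma.) Let $\Sigma=(V,E)$ be a finite directed network in which every edge has capacity $1$, which is inner-superbalanced, and whose boundary is partitioned as $\partial\Sigma=B_1\sqcup B_2\sqcup B_3$ with $S(B_1)=0$. Let $v$ be a $\{0,1\}$-valued flow that is reachable from $B_1$. Then there exists a $\{0,1\}$-valued flow $\tilde v$ extending $v$ (i.e. $\tilde v^e\ge v^e$ for every edge $e$) such that $\tilde v-v$ is a max flow on $B_2$. Furthermore, $\tilde v$ can be chosen so that $\tilde v-v$ is a collection of $S(B_2)$ edge-disjoint directed paths from $B_2$ to $B_2^c=\partial\Sigma\setminus B_2$, and in particular $\tilde v$ is reachable from $B_1\sqcup B_2$.
   Context: For a directed edge $e$, $s(e)$ and $t(e)$ denote its source and target. A flow on a directed network with capacities $c$ is a function $v:E\to\mathbb R_{\ge0}$ with $v^e\le c^e$ and, at every non-boundary vertex $x$, $\sum_{e:t(e)=x}v^e=\sum_{e:s(e)=x}v^e$. The flux of $v$ out of $A\subset\partial\Sigma$ is $S(A;v)=\sum_{e:s(e)\in A}v^e-\sum_{e:t(e)\in A}v^e$, and $S(A)$ is the maximum flux out of $A$ over all flows; a max flow on $A$ is a flow attaining it. A network is inner-superbalanced if at each non-boundary vertex the total capacity of incoming edges is at most that of outgoing edges. A $\{0,1\}$-valued flow $v$ is reachable from a boundary set $A$ if for every edge $e$ with $v^e\neq0$ there is a directed path, all of whose edges have $v$-value $1$, from a vertex of $A$ to $s(e)$. *)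

(* Defs.v *)
From HB Require Import structures.
From mathcomp Require Import all_boot all_order all_algebra.
Set Implicit Arguments. Unset Strict Implicit. Unset Printing Implicit Defensive.
Import Order.TTheory GRing.Theory Num.Theory.
Local Open Scope ring_scope.

Section Network.
Variables (R : realFieldType) (V E : finType) (s t : E -> V).

Definition is_flow (bd : {set V}) (c : E -> R) (v : E -> R) : Prop :=
  (forall e, 0 <= v e /\ v e <= c e) /\
  (forall x, x \notin bd ->
     \sum_(e | t e == x) v e = \sum_(e | s e == x) v e).

Definition flux (A : {set V}) (v : E -> R) : R :=
  \sum_(e | s e \in A) v e - \sum_(e | t e \in A) v e.

Definition max_flux (bd : {set V}) (c : E -> R) (A : {set V}) (m : R) : Prop :=
  (exists w, is_flow bd c w /\ flux A w = m) /\
  (forall w, is_flow bd c w -> flux A w <= m).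

Definition is_max_flow (bd : {set V}) (c : E -> R) (A : {set V}) (v : E -> R)
  : Prop :=
  is_flow bd c v /\ (forall w, is_flow bd c w -> flux A w <= flux A v).

Definition inner_superbalanced (bd : {set V}) (c : E -> R) : Prop :=
  forall x, x \notin bd -> \sum_(e | t e == x) c e <= \sum_(e | s e == x) c e.

Definition zero_one (v : E -> R) : Prop := forall e, v e = 0 \/ v e = 1.

Fixpoint is_walk (a : V) (p : seq E) (b : V) : Prop :=
  match p with
  | [::] => a = b
  | e :: p' => s e = a /\ is_walk (t e) p' b
  end.

Definition walk_vertices (a : V) (p : seq E) : seq V := a :: map t p.

Definition is_path (a : V) (p : seq E) (b : V) : Prop :=
  is_walk a p b /\ uniq (walk_vertices a p).

Definition reachable_from (A : {set V}) (v : E -> R) : Prop :=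
  forall e, v e != 0 ->
    exists a p, a \in A /\ is_walk a p (s e) /\ (forall f, f \in p -> v f = 1).

End Network.

(* Main.v *)
Require Import Defs.
From HB Require Import structures.
From mathcomp Require Import all_boot all_order all_algebra.
From mathcomp Require Import ring lra.
Set Implicit Arguments. Unset Strict Implicit. Unset Printing Implicit Defensive.
Import Order.TTheory GRing.Theory Num.Theory.
Local Open Scope ring_scope.

Section Gen.
Variables (R : realFieldType) (V E : finType) (s t : E -> V).

Lemma sum_cond (P : pred E) (f : E -> R) :
  \sum_(e | P e) f e = \sum_e f e * (P e)%:R.
Proof. rewrite big_mkcond; apply: eq_bigr => e _; by case: (P e); rewrite ?mulr1 ?mulr0. Qed.

Lemma fluxE D (f : E -> R) :
  flux s t D f = \sum_e f e * ((s e \in D)%:R - (t e \in D)%:R).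
Proof.
rewrite /flux (sum_cond (fun e => s e \in D)) (sum_cond (fun e => t e \in D)) -sumrB.
by apply: eq_bigr => e _; rewrite mulrBr.
Qed.

Lemma fluxD D (f g : E -> R) :
  flux s t D (fun e => f e + g e) = flux s t D f + flux s t D g.
Proof. rewrite !fluxE -big_split; apply: eq_bigr => e _ /=; by rewrite mulrDl. Qed.

Lemma fluxB D (f g : E -> R) :
  flux s t D (fun e => f e - g e) = flux s t D f - flux s t D g.
Proof. rewrite !fluxE -sumrB; apply: eq_bigr => e _ /=; by rewrite mulrBl. Qed.

Lemma flux_ext D (f g : E -> R) : (forall e, f e = g e) -> flux s t D f = flux s t D g.
Proof. by move=> h; rewrite !fluxE; apply: eq_bigr => e _; rewrite h. Qed.

Lemma flux0 D : flux s t D (fun _ => 0 : R) = 0.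
Proof. rewrite fluxE big1 // => e _; by rewrite mul0r. Qed.

Lemma flux_set1 x (f : E -> R) :
  flux s t [set x] f = \sum_(e | s e == x) f e - \sum_(e | t e == x) f e.
Proof. by rewrite /flux; congr (_ - _); apply: eq_bigl => e; rewrite in_set1. Qed.

Lemma sum_in1 (D : {set V}) y : \sum_(x in D) (y \in [set x])%:R = (y \in D)%:R :> R.
Proof.
case: (boolP (y \in D)) => yD.
- rewrite (bigD1 y) //= in_set1 eqxx big1 ?addr0 // => x /andP[_ xy].
  by rewrite in_set1 eq_sym (negbTE xy).
- rewrite big1 // => x xD; rewrite in_set1; case: eqP => // yx.
  by rewrite yx xD in yD.
Qed.

Lemma flux_sum D (f : E -> R) : flux s t D f = \sum_(x in D) flux s t [set x] f.
Proof.
rewrite fluxE. under [RHS]eq_bigr => x _ do rewrite fluxE.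
rewrite exchange_big /=; apply: eq_bigr => e _.
rewrite -mulr_sumr; congr (_ * _).
by rewrite sumrB !sum_in1.
Qed.

Lemma flux_restrict (D B : {set V}) (f : E -> R) :
  B \subset D -> (forall x, x \in D -> x \notin B -> flux s t [set x] f = 0) ->
  flux s t D f = flux s t B f.
Proof.
move=> BD H; rewrite !flux_sum (bigID (fun x => x \in B)) /=.
rewrite [X in _ + X]big1 ?addr0; last by move=> x /andP[]; apply: H.
apply: eq_bigl => x; case xB: (x \in B); rewrite ?andbT ?andbF //.
by rewrite (subsetP BD).
Qed.

Lemma flow_cons bd c (f : E -> R) x : is_flow s t bd c f -> x \notin bd ->
  flux s t [set x] f = 0.
Proof. by move=> [_ h] xb; rewrite flux_set1 (h x xb) subrr. Qed.

Lemma sum_pt (e0 : E) (g : E -> R) : \sum_e (e == e0)%:R * g e = g e0.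
Proof.
rewrite (bigD1 e0) //= eqxx mul1r big1 ?addr0 // => e /negbTE ->; by rewrite mul0r.
Qed.

Definition tl (k : E * bool) := if k.2 then s k.1 else t k.1.
Definition hd (k : E * bool) := if k.2 then t k.1 else s k.1.

Fixpoint swalk (a : V) (l : seq (E * bool)) (b : V) : Prop :=
  match l with
  | [::] => a = b
  | k :: l' => tl k = a /\ swalk (hd k) l' b
  end.

Definition dl (l : seq (E * bool)) (e : E) : R :=
  ((e, true) \in l)%:R - ((e, false) \in l)%:R.

Lemma in_cons_nat (x k : E * bool) l : k \notin l ->
  (x \in k :: l)%:R = (x == k)%:R + (x \in l)%:R :> R.
Proof.
move=> kl; rewrite in_cons; case: eqP => [->|] /=; last by rewrite add0r.
by rewrite (negbTE kl) addr0.
Qed.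

Definition chi (D : {set V}) x : R := (x \in D)%:R.

Lemma swalk_flux l a b D : uniq l -> swalk a l b ->
  flux s t D (dl l) = chi D a - chi D b.
Proof.
elim: l a => [|k l IH] a /=.
  move=> _ ->; rewrite (@flux_ext _ _ (fun _ => 0)) ?flux0 ?subrr //.
  by move=> e; rewrite /dl !in_nil subrr.
move=> /andP[kl ul] [tk sw].
rewrite (@flux_ext _ _ (fun e => (((e, true) == k)%:R - ((e, false) == k)%:R) + dl l e)); last first.
  by move=> e; rewrite /dl !in_cons_nat //; ring.
rewrite fluxD (IH _ ul sw) fluxE.
case: k tk {kl sw} => e0 [] /= <-; rewrite /tl /hd /=.
- under eq_bigr => e _ do rewrite !xpair_eqE /= andbT andbF subr0.
  rewrite sum_pt /chi; ring.
- under eq_bigr => e _ do rewrite !xpair_eqE /= andbT andbF sub0r mulNr.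
  rewrite sumrN sum_pt /chi; ring.
Qed.


Definition rrel (valid : pred (E * bool)) : rel V :=
  fun x y => [exists k, [&& valid k, tl k == x & hd k == y]].

Lemma path_swalk valid a q : path (rrel valid) a q ->
  exists l, [/\ swalk a l (last a q), map hd l = q & all valid l].
Proof.
elim: q a => [|y q IH] a /=; first by move=> _; exists [::].
move=> /andP[/existsP[k /and3P[vk /eqP tk /eqP hk]] pq].
have [l [sw ml al]] := IH y pq.
by exists (k :: l); split => //=; rewrite ?hk ?ml ?vk.
Qed.

Definition reach valid (B : {set V}) := [set y | [exists b in B, connect (rrel valid) b y]].

Lemma reach_sub valid (B : {set V}) : B \subset reach valid B.
Proof. apply/subsetP => b bB; rewrite inE; apply/existsP; exists b; by rewrite bB connect0. Qed.

Lemma reach_closed (valid : pred (E * bool)) (B : {set V}) k : valid k -> tl k \in reach valid B -> hd k \in reach valid B.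
Proof.
move=> vk; rewrite !inE => /existsP[b /andP[bB cb]]; apply/existsP; exists b.
rewrite bB /=; apply: connect_trans cb _; apply: connect1.
by apply/existsP; exists k; rewrite vk !eqxx.
Qed.

Lemma reach_path valid (B : {set V}) y : y \in reach valid B ->
  exists b l, [/\ b \in B, swalk b l y, uniq (b :: map hd l) & all valid l].
Proof.
rewrite inE => /existsP[b /andP[bB /connectP[q pq ->]]].
case: (shortenP pq) => q' pq' uq' _.
have [l [sw ml al]] := path_swalk pq'.
by exists b, l; split => //; rewrite ml.
Qed.

Lemma uniq_arcs b l : uniq (b :: map hd l) -> uniq l.
Proof. by move=> /andP[_ /map_uniq]. Qed.

Definition fwd (P : pred E) (k : E * bool) := k.2 && P k.1.

Lemma fwd_in P l e : all (fwd P) l -> ((e, false) \in l) = false.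
Proof.
move=> /allP al; apply/negP => /al; by rewrite /fwd.
Qed.

Lemma fwd_in1 P l e : all (fwd P) l -> ((e, true) \in l) = (e \in map fst l).
Proof.
elim: l => [|[e0 b0] l IH] //= /andP[f0 al].
rewrite !in_cons IH // xpair_eqE; move: f0; rewrite /fwd /= => /andP[-> _].
by rewrite andbT.
Qed.

Lemma dl_fwd P l e : all (fwd P) l -> dl l e = (e \in map fst l)%:R :> R.
Proof. by move=> al; rewrite /dl (fwd_in _ al) (fwd_in1 _ al) subr0. Qed.

Lemma fwd_walk P a l b : all (fwd P) l -> swalk a l b ->
  is_walk s t a (map fst l) b /\ map t (map fst l) = map hd l.
Proof.
elim: l a => [|[e0 b0] l IH] a //= /andP[f0 al] [tk sw].
move: f0 tk sw; rewrite /fwd /tl /hd /= => /andP[-> _] tk sw.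
have [w m] := IH _ al sw. by rewrite m.
Qed.

Lemma fwd_P P l e : all (fwd P) l -> e \in map fst l -> P e.
Proof.
elim: l => [|[e0 b0] l IH] //= /andP[f0 al]; rewrite in_cons => /orP[/eqP->|]; last by apply: IH.
by move: f0; rewrite /fwd /= => /andP[].
Qed.

Lemma walk_prefix a p b e : is_walk s t a p b -> e \in p ->
  exists p1, is_walk s t a p1 (s e) /\ {subset p1 <= p}.
Proof.
elim: p a => [|e0 p IH] a //= [<- w]; rewrite in_cons => /orP[/eqP->|ep].
  by exists [::].
have [p1 [w1 sub]] := IH _ w ep.
exists (e0 :: p1); split => //= f; rewrite !in_cons => /orP[->//|/sub ->]; by rewrite orbT.
Qed.

Lemma walk_closed (A : {set V}) a p b :
  (forall e, s e \in A -> t e \in A) -> is_walk s t a p b -> a \in A -> b \in A.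
Proof.
move=> h; elim: p a => [|e p IH] a /=; first by move=> ->.
by move=> [<- w] /h /(IH _ w).
Qed.

Lemma ex_max (T : finType) (P : pred T) (f : T -> R) x0 : P x0 ->
  exists x, P x /\ forall y, P y -> f y <= f x.
Proof.
move=> P0.
suff [x [Px H]] : exists x, P x /\ forall y, y \in enum T -> P y -> f y <= f x.
  by exists x; split => // y; apply: H; rewrite mem_enum.
elim: (enum T) => [|y sq [x [Px H]]]; first by exists x0.
case Py: (P y); last first.
  exists x; split => // z; rewrite in_cons => /orP[/eqP->|/H//]; by rewrite Py.
have [h|h] := leP (f y) (f x).
  exists x; split => // z; rewrite in_cons => /orP[/eqP->//|/H//].
exists y; split => // z; rewrite in_cons => /orP[/eqP->//|zs Pz].
by apply: le_trans (H z zs Pz) (ltW h).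
Qed.

End Gen.
Arguments dl {R E} l e.
Arguments chi {R V} D x.

Section Main.
Variables (R : realFieldType) (V E : finType) (s t : E -> V) (B1 B2 B3 : {set V}).
Hypotheses (hd12 : [disjoint B1 & B2]) (hd13 : [disjoint B1 & B3])
  (hd23 : [disjoint B2 & B3]).
Let bd := B1 :|: B2 :|: B3.
Let one := fun _ : E => 1 : R.
Hypothesis hsb : inner_superbalanced s t bd one.
Hypothesis hS1 : max_flux s t bd one B1 0.
Variable v : E -> R.
Hypothesis hv : is_flow s t bd one v.
Hypothesis hv01 : zero_one v.
Hypothesis hvr : reachable_from s t B1 v.

Lemma cons_of_flux (f : E -> R) x : flux s t [set x] f = 0 ->
  \sum_(e | t e == x) f e = \sum_(e | s e == x) f e.
Proof. by rewrite flux_set1 => /eqP; rewrite subr_eq0 => /eqP ->. Qed.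

Lemma dl_cons l b y x : uniq l -> swalk s t b l y -> b \in bd -> y \in bd -> x \notin bd ->
  flux s t [set x] (dl l) = 0 :> R.
Proof.
move=> ul sw bb yb xb; rewrite (swalk_flux _ _ ul sw) /chi !in_set1.
have -> : (b == x) = false by apply/eqP => bx; rewrite -bx bb in xb.
have -> : (y == x) = false by apply/eqP => yx; rewrite -yx yb in xb.
by rewrite subrr.
Qed.

Lemma fwd_flow (P : pred E) l b y : uniq l -> all (fwd P) l -> swalk s t b l y ->
  b \in bd -> y \in bd -> is_flow s t bd one (dl l).
Proof.
move=> ul al sw bb yb; split.
  move=> e; rewrite /dl (fwd_in _ al) subr0 /one; case: (_ \in _) => /=; lra.
by move=> x xb; apply: cons_of_flux; apply: dl_cons sw _ _ _.
Qed.

Definition Wset := reach s t (fwd (fun _ : E => true)) B1.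

Lemma Wclosed e : s e \in Wset -> t e \in Wset.
Proof. by move=> h; apply: (@reach_closed _ _ s t _ B1 (e, true)). Qed.

Lemma inbd1 x : x \in B1 -> x \in bd.
Proof. by rewrite /bd !inE => ->. Qed.
Lemma inbd2 x : x \in B2 -> x \in bd.
Proof. by rewrite /bd !inE => ->; rewrite orbT. Qed.
Lemma inbd3 x : x \in B3 -> x \in bd.
Proof. by rewrite /bd !inE => ->; rewrite orbT. Qed.

Lemma W_disj y : y \in Wset -> (y \notin B2) && (y \notin B3).
Proof.
move=> yW; apply/negP => /negP; rewrite negb_and !negbK => yB.
have [b [l [bB sw ul al]]] := reach_path yW.
have yb : y \in bd by case/orP: yB => [/inbd2|/inbd3].
have fl := fwd_flow (uniq_arcs ul) al sw (inbd1 bB) yb.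
have := hS1.2 _ fl; rewrite (swalk_flux _ _ (uniq_arcs ul) sw) /chi bB.
have -> : (y \in B1) = false.
  by case/orP: yB => [/(disjointFl hd12)|/(disjointFl hd13)].
by rewrite /=; lra.
Qed.

Lemma v_W e : v e != 0 -> s e \in Wset.
Proof.
move=> /hvr [a [p [aB [w _]]]].
apply: (walk_closed Wclosed w).
by rewrite (subsetP (reach_sub _ _ _ _)).
Qed.


Definition chiS (p : {set E}) e : R := (e \in p)%:R.

Definition candb (p : {set E}) : bool :=
  [forall x, (x \notin bd) ==> (flux s t [set x] (chiS p) == 0)] &&
  [forall e, (e \in p) ==> (v e == 0)].

Definition weight (p : {set E}) : R :=
  flux s t B2 (chiS p) * (#|E|.+1)%:R - #|p|%:R.

Lemma cand_flow p : candb p -> is_flow s t bd one (chiS p).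
Proof.
move=> /andP[/forallP h _]; split.
  by move=> e; rewrite /chiS /one; case: (_ \in _) => /=; lra.
move=> x xb; apply: cons_of_flux; by move: (h x); rewrite xb => /eqP.
Qed.

Lemma cand_v p e : candb p -> e \in p -> v e = 0.
Proof. by move=> /andP[_ /forallP h] ep; move: (h e); rewrite ep => /eqP. Qed.

Lemma cand0 : candb set0.
Proof.
apply/andP; split; apply/forallP => x; apply/implyP; last by rewrite inE.
move=> _; rewrite (@flux_ext _ _ _ _ _ _ _ (fun _ => 0)) ?flux0 //.
by move=> e; rewrite /chiS inE.
Qed.

Definition resv (p : {set E}) (k : E * bool) : bool :=
  if k.2 then (v k.1 == 0) && (k.1 \notin p) else k.1 \in p.

Definition Xset p := reach s t (resv p) B2.

Lemma X_disj p : candb p -> (forall q, candb q -> weight q <= weight p) ->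
  forall y, y \in Xset p -> (y \notin B1) && (y \notin B3).
Proof.
move=> cp opt y yX; apply/negP => /negP; rewrite negb_and !negbK => yB.
have [b [l [bB sw un al]]] := reach_path yX.
have ul := uniq_arcs un.
have yb : y \in bd by case/orP: yB => [/inbd1|/inbd3].
have yB2 : (y \in B2) = false.
  by case/orP: yB => [/(disjointFr hd12)|/(disjointFl hd23)].
pose p' := [set e | if (e, true) \in l then true else if (e, false) \in l then false else e \in p].
have key : forall e, chiS p' e = chiS p e + dl l e.
  move=> e; rewrite /chiS /dl inE.
  case T: ((e, true) \in l).
    have := allP al _ T; rewrite /resv /= => /andP[_ nep].
    have -> : (e \in p) = false by apply/negbTE.
    case F: ((e, false) \in l); last by rewrite /=; ring.
    by have := allP al _ F; rewrite /resv /= (negbTE nep).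
  case F: ((e, false) \in l).
    have := allP al _ F; rewrite /resv /= => ep.
    have -> : (e \in p) = true by [].
    by rewrite /=; ring.
  by rewrite /=; ring.
have cp' : candb p'.
  apply/andP; split; apply/forallP => x; apply/implyP => xb.
    rewrite (flux_ext _ _ _ key) fluxD (flow_cons (cand_flow cp) xb) add0r.
    by rewrite (dl_cons ul sw (inbd2 bB) yb xb).
  move: xb; rewrite inE.
  case T: ((x, true) \in l).
    by have := allP al _ T; rewrite /resv /= => /andP[].
  case F: ((x, false) \in l) => //.
  by move=> xp; apply/eqP; apply: cand_v cp xp.
have := opt _ cp'; rewrite /weight (flux_ext _ _ _ key) fluxD.
rewrite (swalk_flux _ _ ul sw) /chi bB yB2 /=.
have c1 : (#|p'|%:R : R) <= #|E|%:R by rewrite ler_nat max_card.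
have c2 : (0 : R) <= #|p|%:R by rewrite ler0n.
have hN : (#|E|.+1%:R : R) = #|E|%:R + 1 by rewrite -addn1 natrD.
rewrite mulrDl hN; lra.
Qed.


Lemma cut p : candb p -> (forall q, candb q -> weight q <= weight p) ->
  forall w, is_flow s t bd one w -> flux s t B2 w <= flux s t B2 (chiS p).
Proof.
move=> cp opt w hw.
set X := Xset p; set W := Wset.
have B2X : B2 \subset X by apply: reach_sub.
have Xd := X_disj cp opt.
have Xbd : forall x, x \in X -> x \notin B2 -> x \notin bd.
  move=> x xX xB; have := Xd x xX; rewrite /bd !inE => /andP[/negbTE -> /negbTE ->].
  by rewrite (negbTE xB).
have W2 : forall x, x \in W -> x \notin B2.
  by move=> x /W_disj /andP[].
have Wbd : forall x, x \in X -> x \in W -> x \notin bd.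
  move=> x xX xW; have := Xd x xX; rewrite /bd !inE => /andP[/negbTE -> /negbTE ->].
  by rewrite (negbTE (W2 x xW)).
have -> : flux s t B2 w = flux s t (X :\: W) w.
  symmetry; apply: flux_restrict.
    apply/subsetP => x xB; rewrite inE (subsetP B2X) // andbT.
    by apply/negP => /W2; rewrite xB.
  by move=> x; rewrite inE => /andP[_ xX] xB; apply: flow_cons hw (Xbd x xX xB).
have -> : flux s t B2 (chiS p) = flux s t X (chiS p).
  symmetry; apply: flux_restrict => // x xX xB.
  by apply: flow_cons (cand_flow cp) (Xbd x xX xB).
have hU1 : 0 <= flux s t (X :&: W) one.
  rewrite flux_sum; apply: sumr_ge0 => x; rewrite inE => /andP[xX xW].
  by rewrite flux_set1 subr_ge0; apply: hsb; apply: Wbd.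
have hUv : flux s t (X :&: W) v = 0.
  rewrite flux_sum; apply: big1 => x; rewrite inE => /andP[xX xW].
  by apply: flow_cons hv (Wbd x xX xW).
suff : flux s t (X :\: W) w <=
  flux s t X (chiS p) - flux s t (X :&: W) one + flux s t (X :&: W) v by lra.
rewrite !fluxE -sumrB -big_split /=; apply: ler_sum => e _.
have f1 : (s e \in W) ==> (t e \in W) by apply/implyP; apply: Wclosed.
have f4 : [&& s e \in X, v e == 0 & e \notin p] ==> (t e \in X).
  apply/implyP => /and3P[sX ve ep].
  by apply: (@reach_closed _ _ s t _ B2 (e, true)) => //; rewrite /resv /= ve ep.
have f5 : [&& t e \in X & e \in p] ==> (s e \in X).
  apply/implyP => /andP[tX ep].
  by apply: (@reach_closed _ _ s t _ B2 (e, false)).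
have [w0 w1] := hw.1 e; rewrite /one in w1.
rewrite /chiS /one !in_setD !in_setI.
case: (hv01 e) => ve.
  move: f1 f4 f5; rewrite ve eqxx /=.
  case: (s e \in X); case: (t e \in X); case: (s e \in W); case: (t e \in W);
    case: (e \in p) => /= h1 h2 h3; rewrite ?mulr1n ?mulr0n; first [done | lra].
have sW : s e \in W by apply: v_W; rewrite ve; apply: oner_neq0.
have ep : (e \in p) = false.
  by apply/negP => /(cand_v cp); rewrite ve => /eqP; apply/negP; apply: oner_neq0.
move: f1 f4 f5; rewrite ve sW ep /=.
case: (s e \in X); case: (t e \in X); case: (t e \in W) => /= h1 h2 h3;
  rewrite ?mulr1n ?mulr0n; first [done | lra].
Qed.


Lemma path_exists q : (forall x, x \notin bd -> flux s t [set x] (chiS q) = 0) ->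
  0 < flux s t B2 (chiS q) ->
  exists b l y, [/\ b \in B2, y \in B1 :|: B3, swalk s t b l y,
     uniq (b :: map (hd s t) l) & all (fwd (fun e => e \in q)) l].
Proof.
move=> hc hpos.
set Y := reach s t (fwd (fun e => e \in q)) B2.
case: (boolP [exists y, (y \in Y) && (y \in B1 :|: B3)]).
  move=> /existsP[y /andP[yY yB]].
  have [b [l [bB sw un al]]] := reach_path yY.
  by exists b, l, y.
move=> /existsPn hn; exfalso.
have B2Y : B2 \subset Y by apply: reach_sub.
have : flux s t Y (chiS q) <= 0.
  rewrite fluxE; apply: sumr_le0 => e _.
  have f : (e \in q) && (s e \in Y) ==> (t e \in Y).
    apply/implyP => /andP[eq sY].
    by apply: (@reach_closed _ _ s t _ B2 (e, true)) => //; rewrite /fwd /= eq.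
  move: f; rewrite /chiS.
  case: (e \in q); case: (s e \in Y); case: (t e \in Y) => /= h;
    rewrite ?mulr1n ?mulr0n; try done; lra.
rewrite (flux_restrict B2Y); first by lra.
move=> x xY xB; apply: hc.
move: (hn x); rewrite xY /= inE negb_or => /andP[n1 n3].
by rewrite /bd !inE (negbTE n1) (negbTE n3) (negbTE xB).
Qed.

Definition chiL (ps : seq (V * seq E)) e : R := (e \in flatten (map snd ps))%:R.

Lemma decomp_step q : (forall x, x \notin bd -> flux s t [set x] (chiS q) = 0) ->
  0 < flux s t B2 (chiS q) ->
  exists b P y, [/\ b \in B2, y \in B1 :|: B3, is_path s t b P y,
    {subset P <= q} /\ (#|[set e in q | e \notin P]| < #|q|)%N &
    (forall x, x \notin bd -> flux s t [set x] (fun e => (e \in P)%:R : R) = 0) /\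
    flux s t B2 (fun e => (e \in P)%:R : R) = 1].
Proof.
move=> hc h.
have [b [l [y [bB yB sw un al]]]] := path_exists hc h.
have ul := uniq_arcs un.
have yB2 : (y \in B2) = false.
  by move: yB; rewrite inE => /orP[/(disjointFr hd12)|/(disjointFl hd23)].
have yb : y \in bd by move: yB; rewrite inE => /orP[/inbd1|/inbd3].
have hdl : forall e, dl l e = (e \in map fst l)%:R :> R.
  by move=> e; apply: dl_fwd al.
have Pq : forall e, e \in map fst l -> e \in q by move=> e; apply: fwd_P al.
have [wk mt] := fwd_walk al sw.
exists b, (map fst l), y; split => //.
- split => //; by rewrite /walk_vertices mt.
split => //.
- apply: proper_card; apply/properP; split.
    by apply/subsetP => e; rewrite inE => /andP[].
  case: l sw al {ul un hdl Pq wk mt} => [/= eb|[e0 b0] l' /= [_ _] /andP[f0 _]].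
    by move: bB; rewrite eb yB2.
  exists e0; first by move: f0; rewrite /fwd /= => /andP[].
  by rewrite inE in_cons eqxx andbF.
- split.
    move=> x xb; rewrite -(flux_ext _ _ _ hdl).
    exact: (dl_cons ul sw (inbd2 bB) yb xb).
  by rewrite -(flux_ext _ _ _ hdl) (swalk_flux _ _ ul sw) /chi bB yB2 /= subr0.
Qed.

Lemma decomp n : forall q : {set E}, (#|q| <= n)%N ->
  (forall x, x \notin bd -> flux s t [set x] (chiS q) = 0) ->
  exists ps : seq (V * seq E),
   [/\ forall r, r \in ps -> r.1 \in B2 /\
          exists b, b \in (B1 :|: B3) /\ is_path s t r.1 r.2 b,
       uniq (flatten (map snd ps)),
       {subset flatten (map snd ps) <= q},
       (forall x, x \notin bd -> flux s t [set x] (chiL ps) = 0) &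
       flux s t B2 (chiL ps) = (size ps)%:R /\ flux s t B2 (chiS q) <= (size ps)%:R].
Proof.
elim: n => [|n IH] q hq hc;
  (have [h|h] := leP (flux s t B2 (chiS q)) 0;
  [ exists [::]; split => //;
    [ by move=> x _; rewrite (@flux_ext _ _ _ _ _ _ _ (fun _ => 0)) ?flux0
    | by rewrite (@flux_ext _ _ _ _ _ _ _ (fun _ => 0)) ?flux0 ]
  | have [b [P [y [bB yB pP [Pq ltq] [hcP flP]]]]] := decomp_step hc h ]).
  by move: ltq; rewrite ltnNge (leq_trans hq (leq0n _)).
set q' := [set e in q | e \notin P] in ltq.
have key : forall e, chiS q e = chiS q' e + (e \in P)%:R.
  move=> e; rewrite /chiS /q' inE; case eP: (e \in P).
    by rewrite Pq //= add0r.
  by rewrite andbT addr0.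
have hc' : forall x, x \notin bd -> flux s t [set x] (chiS q') = 0.
  move=> x xb; have := hc x xb; rewrite (flux_ext _ _ _ key) fluxD hcP //.
  by rewrite addr0.
have [ps' [hp' uq' sub' hc2 [fl' le']]] := IH q' (leq_trans ltq hq) hc'.
have disj : forall e, e \in P -> e \in flatten (map snd ps') = false.
  move=> e eP; apply/negP => /sub'; by rewrite inE eP andbF.
have hL : forall e, chiL ((b, P) :: ps') e = (e \in P)%:R + chiL ps' e.
  move=> e; rewrite /chiL /= mem_cat; case eP: (e \in P); last by rewrite add0r.
  by rewrite disj // addr0.
exists ((b, P) :: ps'); split.
- move=> r; rewrite in_cons => /orP[/eqP-> /=|/hp' //]; split => //.
  by exists y.
- rewrite /= cat_uniq uq' andbT; apply/andP; split.
    by move: pP => [_ /andP[_ /map_uniq]].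
  by apply/hasPn => e /= ef; apply/negP => eP; rewrite disj in ef.
- move=> e /=; rewrite mem_cat => /orP[/Pq //|/sub']; by rewrite inE => /andP[].
- move=> x xb; rewrite (flux_ext _ _ _ hL) fluxD hc2 // hcP //.
  by rewrite addr0.
- rewrite (flux_ext _ _ _ hL) fluxD fl' flP.
  rewrite (flux_ext _ _ _ key) fluxD flP.
  rewrite /= -addn1 natrD; split; [ring | lra].
Qed.


Lemma is_flow_ext (f g : E -> R) : (forall e, f e = g e) ->
  is_flow s t bd one f -> is_flow s t bd one g.
Proof.
move=> h [h1 h2]; split; first by move=> e; rewrite -h.
move=> x xb; rewrite -(eq_bigr _ (fun e _ => h e)) -[in RHS](eq_bigr _ (fun e _ => h e)).
exact: h2.
Qed.

Lemma main_res :
  exists vt : E -> R,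
    [/\ is_flow s t bd one vt,
        zero_one vt /\ (forall e, v e <= vt e),
        is_max_flow s t bd one B2 (fun e => vt e - v e),
        (exists ps : seq (V * seq E),
           [/\ max_flux s t bd one B2 ((size ps)%:R : R),
               (forall q, q \in ps -> q.1 \in B2 /\
                  exists b, b \in (B1 :|: B3) /\ is_path s t q.1 q.2 b),
               uniq (flatten (map snd ps)) &
               (forall e, vt e - v e = (e \in flatten (map snd ps))%:R)])
      & reachable_from s t (B1 :|: B2) vt].
Proof.
have [p [cp opt]] := ex_max weight cand0.
have hcp : forall x, x \notin bd -> flux s t [set x] (chiS p) = 0.
  by move=> x xb; apply: flow_cons (cand_flow cp) xb.
have [ps [hp uq sub hc2 [fl le]]] := decomp (leqnn #|p|) hcp.
set F := flatten (map snd ps) in uq sub hp.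
have Fv : forall e, e \in F -> v e = 0 by move=> e /sub; apply: cand_v.
have flL : is_flow s t bd one (chiL ps).
  split; first by move=> e; rewrite /chiL /one; case: (_ \in _) => /=; lra.
  by move=> x xb; apply: cons_of_flux; apply: hc2.
have cutb : forall w, is_flow s t bd one w -> flux s t B2 w <= (size ps)%:R.
  by move=> w hw; apply: le_trans (cut cp opt hw) le.
have hdiff : forall e, v e + chiL ps e - v e = chiL ps e by move=> e; ring.
exists (fun e => v e + chiL ps e); split.
- split.
    move=> e; rewrite /one /chiL -/F; case eF: (e \in F).
      by rewrite (Fv _ eF) /=; lra.
    by case: (hv01 e) => ->; rewrite /=; lra.
  move=> x xb; apply: cons_of_flux; rewrite fluxD (flow_cons hv xb) (hc2 _ xb).
  by rewrite addr0.
- split.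
    move=> e; rewrite /chiL -/F; case eF: (e \in F).
      by rewrite (Fv _ eF) /= add0r; right.
    by rewrite /= addr0; apply: hv01.
  by move=> e; rewrite /chiL; case: (_ \in _) => /=; lra.
- split.
    by apply: is_flow_ext flL => e; rewrite hdiff.
  move=> w hw; rewrite (flux_ext _ _ _ hdiff) fl; exact: cutb.
- exists ps; split => //.
    split; last exact: cutb.
    by exists (chiL ps).
- move=> e; rewrite /chiL -/F; case eF: (e \in F) => /=.
    move=> _; move/flattenP: eF => [P /mapP[r rps ->] eP].
    have [r1B [b [bB [wk _]]]] := hp r rps.
    have [p1 [w1 s1]] := walk_prefix wk eP.
    exists r.1, p1; split; first by rewrite inE r1B orbT.
    split => // f fp1.
    have fF : f \in F by apply/flattenP; exists r.2; [apply: map_f | apply: s1].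
    by rewrite fF (Fv _ fF) add0r.
  rewrite addr0 => /hvr [a [p1 [aB [w1 hall]]]].
  exists a, p1; split; first by rewrite inE aB.
  split => // f fp1.
  case fF: (f \in F); last by rewrite hall // addr0.
  by have := hall f fp1; rewrite (Fv _ fF) => /eqP; rewrite eq_sym oner_eq0.
Qed.

End Main.

Theorem lemma2 (R : realFieldType) (V E : finType) (s t : E -> V)
  (B1 B2 B3 : {set V})
  (hd12 : [disjoint B1 & B2]) (hd13 : [disjoint B1 & B3])
  (hd23 : [disjoint B2 & B3])
  (hsb : inner_superbalanced s t (B1 :|: B2 :|: B3) (fun _ => 1 : R))
  (hS1 : max_flux s t (B1 :|: B2 :|: B3) (fun _ => 1 : R) B1 0)
  (v : E -> R)
  (hv : is_flow s t (B1 :|: B2 :|: B3) (fun _ => 1 : R) v)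
  (hv01 : zero_one v)
  (hvr : reachable_from s t B1 v) :
  exists vt : E -> R,
    [/\ is_flow s t (B1 :|: B2 :|: B3) (fun _ => 1 : R) vt,
        zero_one vt /\ (forall e, v e <= vt e),
        is_max_flow s t (B1 :|: B2 :|: B3) (fun _ => 1 : R) B2 (fun e => vt e - v e),
        (exists ps : seq (V * seq E),
           [/\ max_flux s t (B1 :|: B2 :|: B3) (fun _ => 1 : R) B2 ((size ps)%:R : R),
               (forall q, q \in ps -> q.1 \in B2 /\
                  exists b, b \in (B1 :|: B3) /\ is_path s t q.1 q.2 b),
               uniq (flatten (map snd ps)) &
               (forall e, vt e - v e = (e \in flatten (map snd ps))%:R)])
      & reachable_from s t (B1 :|: B2) vt].
Proof.
exact: (@main_res R V E s t B1 B2 B3 hd12 hd13 hd23 hsb hS1 v hv hv01 hvr).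
Qed.
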